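(* Let $r \ge t \ge 1$ be integers. If $M$ is a loopless rank-$r$ matroid with no $(t+1)$-claw, then $|E(M)| \ge 2r - t$. If equality holds, then $M$ is the direct sum of $r-t$ circuits and some number of coloops.
   Context: A claw of a matroid $M$ is a set that is both a flat and an independent set of $M$; a $k$-claw is a claw of size $k$. *)

(* Defs.v *)
From mathcomp Require Import all_boot.
Set Implicit Arguments. Unset Strict Implicit. Unset Printing Implicit Defensive.

(* A matroid whose ground set E(M) is the whole finite type T. *)
Record matroid (T : finType) := Matroid {
  indep : {set T} -> bool;
  indep0 : indep set0;
  indep_sub : forall A B : {set T}, A \subset B -> indep B -> indep A;
  indep_aug : forall A B : {set T}, indep A -> indep B -> #|A| < #|B| ->
      exists2 x, x \in B :\: A & indep (x |: A)
}.

Section MatroidDefs.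
Variables (T : finType) (M : matroid T).

Definition mrank (A : {set T}) : nat :=
  \max_(B : {set T} | (B \subset A) && indep M B) #|B|.

Definition rank_of : nat := mrank [set: T].

Definition loopless : Prop := forall x : T, indep M [set x].

Definition closure (X : {set T}) : {set T} :=
  [set x | mrank (x |: X) == mrank X].
Definition flat (F : {set T}) : bool := closure F == F.

Definition claw (X : {set T}) : bool := flat X && indep M X.
Definition kclaw (k : nat) (X : {set T}) : bool := claw X && (#|X| == k).

Definition circuit (C : {set T}) : bool :=
  ~~ indep M C && [forall x in C, indep M (C :\ x)].

(* M is the direct sum of k circuits and some number of coloops:
   there are k pairwise disjoint nonempty sets C_1..C_k, each a circuit of M,
   such that the independent sets of M are exactly the sets containing none
   of the C_i (i.e. M = U_{|C_1|-1,|C_1|} (+) ... (+) U_{|C_k|-1,|C_k|} (+) free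
   matroid on the remaining elements, which are coloops). *)
Definition direct_sum_circuits_coloops (k : nat) : Prop :=
  exists Cs : {set {set T}},
    [/\ trivIset Cs, set0 \notin Cs, #|Cs| = k,
        (forall C, C \in Cs -> circuit C) &
        (forall X : {set T}, indep M X = [forall C in Cs, ~~ (C \subset X)])].
End MatroidDefs.

(* Main.v *)
Require Import Defs.
From mathcomp Require Import all_boot zify.
Set Implicit Arguments. Unset Strict Implicit. Unset Printing Implicit Defensive.

Lemma indep_le_rank (T : finType) (M : matroid T) (Y : {set T}) :
  indep M Y -> #|Y| <= rank_of M.
Proof.
move=> iY; rewrite /rank_of /mrank.
by apply: (@leq_bigmax_cond _ (fun B : {set T} => (B \subset setT) && indep M B) (fun B => #|B|) Y); rewrite subsetT iY.
Qed.

Lemma sub_card (T : finType) (D : {set T}) k : k <= #|D| ->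
  exists2 X : {set T}, X \subset D & #|X| = k.
Proof.
elim: k => [|k IH] hk; first by exists set0; rewrite ?sub0set ?cards0.
have [X sXD cX] := IH (ltnW hk).
have : 0 < #|D :\: X| by rewrite cardsD (setIidPr sXD); lia.
move/card_gt0P => [x]; rewrite inE => /andP[xX xD].
exists (x |: X); first by rewrite subUset sub1set xD sXD.
by rewrite cardsU1 xX cX.
Qed.

Lemma extend (T : finType) (M : matroid T) (I K S : {set T}) :
  indep M I -> indep M K -> I \subset S -> K \subset S ->
  exists J, [/\ indep M J, I \subset J, J \subset S & #|K| <= #|J|].
Proof.
move=> iI iK sIS sKS.
pose P := fun J : {set T} => [&& indep M J, I \subset J & J \subset S].
have P0 : 0 < #|P|.
  by apply/card_gt0P; exists I; rewrite /P /= unfold_in /= iI subxx sIS.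
have [J0 PJ0 hmax] := @eq_bigmax_cond _ P (fun J => #|J|) P0.
move: PJ0; rewrite unfold_in /= => /and3P[iJ sIJ sJS].
exists J0; split => //.
rewrite leqNgt; apply/negP => lt.
have [x /setDP[xK xJ] ix] := indep_aug iJ iK lt.
have : #|x |: J0| <= \max_(J in P) #|J|.
  apply: (@leq_bigmax_cond _ P (fun J => #|J|)).
  rewrite /P /= ix (subset_trans sIJ (subsetUr _ _)) /=.
  by rewrite subUset sub1set (subsetP sKS _ xK) sJS.
by rewrite hmax cardsU1 xJ ltnn.
Qed.

Lemma exch (T : finType) (M : matroid T) (B I : {set T}) e :
  indep M B -> #|B| = rank_of M -> e \notin B -> indep M I -> e \in I ->
  I \subset e |: B -> exists2 y, y \in B :\: I & indep M (e |: (B :\ y)).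
Proof.
move=> iB cB eB iI eI sI.
have [J [iJ sIJ sJ cJ]] := extend iI iB sI (subsetUr _ _).
have nsub : ~~ (e |: B \subset J).
  apply/negP => sub.
  have := indep_le_rank (indep_sub sub iJ).
  by rewrite cardsU1 eB; lia.
have [y yeB yJ] := subsetPn nsub.
have yI : y \notin I by apply: contra yJ; apply: (subsetP sIJ).
have ye : y != e by apply: contraNneq yJ => ->; apply: (subsetP sIJ).
have yB : y \in B by move: yeB; rewrite in_setU1 (negbTE ye).
exists y; first by rewrite inE yI yB.
have sub2 : J \subset e |: (B :\ y).
  apply/subsetP => x xJ; have := subsetP sJ x xJ; rewrite !inE.
  case/orP=> [->//|xB]; apply/orP; right; rewrite xB andbT.
  by apply: contraNneq yJ => <-.
have : J == e |: (B :\ y).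
  rewrite eqEcard sub2.
  have h1 := cardsD1 y B; rewrite yB add1n in h1.
  have h2 : #|e |: (B :\ y)| <= #|B :\ y|.+1.
    by rewrite cardsU1; case: (e \notin B :\ y).
  move: cJ h1 h2; rewrite -/(rank_of M).
  move: #|J| #|B| #|B :\ y| #|e |: (B :\ y)| (rank_of M) => a b c d r /=.
  by move=> ba bc dc; rewrite bc in ba; apply: leq_trans dc ba.
by move/eqP <-.
Qed.

Lemma flat_of (T : finType) (M : matroid T) (X : {set T}) :
  indep M X -> (forall x, x \notin X -> indep M (x |: X)) -> flat M X.
Proof.
have mrank_indep (A : {set T}) : indep M A -> mrank M A = #|A|.
  move=> iA; apply/eqP; rewrite eqn_leq; apply/andP; split.
    by apply/bigmax_leqP => B /andP[sBA _]; apply: subset_leq_card.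
  by apply: (@leq_bigmax_cond _ (fun B : {set T} => (B \subset A) && indep M B) (fun B => #|B|) A); rewrite subxx iA.
move=> iX h; apply/eqP/setP => x; rewrite inE.
case: (boolP (x \in X)) => xX.
  by rewrite (setUidPr _) ?sub1set // eqxx.
rewrite (mrank_indep _ (h x xX)) (mrank_indep _ iX) cardsU1 xX add1n.
by rewrite eqn_leq ltnn.
Qed.

Lemma exists_basis (T : finType) (M : matroid T) :
  exists2 B, indep M B & #|B| = rank_of M.
Proof.
rewrite /rank_of /mrank.
pose P := fun B : {set T} => (B \subset setT) && indep M B.
have P0 : 0 < #|P| by apply/card_gt0P; exists set0; rewrite unfold_in /P /= sub0set indep0.
have [B /andP[_ iB] ->] := @eq_bigmax_cond _ P (fun B => #|B|) P0.
by exists B.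
Qed.

Definition Aset (T : finType) (M : matroid T) (B : {set T}) (e : T) :=
  [set b in B | indep M (e |: (B :\ b))].

Lemma AsetB (T : finType) (M : matroid T) B e : Aset M B e \subset B.
Proof. by apply/subsetP => x; rewrite inE => /andP[]. Qed.

Lemma S1 (T : finType) (M : matroid T) B e : loopless M ->
  indep M B -> #|B| = rank_of M -> e \notin B -> exists b, b \in Aset M B e.
Proof.
move=> hl iB cB eB.
have s1 : [set e] \subset e |: B by rewrite sub1set setU11.
have [y /setDP[yB _] iy] := exch iB cB eB (hl e) (set11 e) s1.
by exists y; rewrite inE iy yB.
Qed.

Lemma S2 (T : finType) (M : matroid T) B e :
  indep M B -> #|B| = rank_of M -> e \notin B -> ~~ indep M (e |: Aset M B e).
Proof.
move=> iB cB eB; apply/negP => iI.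
have s1 : e |: Aset M B e \subset e |: B by apply: setUS; apply: AsetB.
have [y /setDP[yB yI] iy] := exch iB cB eB iI (setU11 _ _) s1.
by move: yI; rewrite !inE yB iy orbT.
Qed.

Lemma claw_bound (T : finType) (M : matroid T) (t : nat) B (g : T -> T) :
  (forall X : {set T}, ~~ kclaw M t.+1 X) ->
  indep M B -> (forall x, x \notin B -> g x \in Aset M B x) ->
  #|B :\: [set g x | x in ~: B]| <= t.
Proof.
move=> hc iB hg; rewrite leqNgt; apply/negP => lt.
have [X sX cX] := sub_card lt.
have sXB : X \subset B by apply: subset_trans sX (subsetDl _ _).
have iX : indep M X := indep_sub sXB iB.
have := hc X; rewrite /kclaw /claw cX eqxx iX !andbT.
move/negP; apply; apply: flat_of => // x xX.
case: (boolP (x \in B)) => xB.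
  by apply: indep_sub iB; rewrite subUset sub1set xB sXB.
have := hg x xB; rewrite inE => /andP[gB ig].
apply: indep_sub ig; apply: setUS; apply/subsetP => y yX.
rewrite !inE (subsetP sXB _ yX) andbT.
apply: contraTneq (subsetP sX _ yX) => ->.
by rewrite inE imset_f // inE.
Qed.

Lemma arith3 (r c c1 gG i d nT t : nat) :
  d = r - i -> i <= gG -> gG <= c1 -> c = 1 + c1 -> r + c = nT -> nT + t = 2 * r ->
  d <= t -> False.
Proof. lia. Qed.

Lemma S3 (T : finType) (M : matroid T) (t : nat) B e f : loopless M ->
  (forall X : {set T}, ~~ kclaw M t.+1 X) -> #|T| + t = 2 * rank_of M ->
  indep M B -> #|B| = rank_of M -> e \notin B -> f \notin B -> e != f ->
  [disjoint Aset M B e & Aset M B f].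
Proof.
move=> hl hc hT iB cB eB fB ef.
rewrite -setI_eq0; apply: contraT => /set0Pn [b]; rewrite inE => /andP[be bf].
pose g x := if (x == e) || (x == f) then b else odflt x [pick y in Aset M B x].
have hg : forall x, x \notin B -> g x \in Aset M B x.
  move=> x xB; rewrite /g; case: ifP => [/orP[/eqP->|/eqP->]//|_].
  case: pickP => [y //|h0]; have [z hz] := S1 hl iB cB xB.
  by have := h0 z; rewrite /= hz.
have hb := claw_bound hc iB hg.
have sG : [set g x | x in ~: B] \subset [set g x | x in ~: B :\ e].
  apply/subsetP => z /imsetP [y yB ->].
  case: (eqVneq y e) => [ye|ye].
    have -> : g y = g f by rewrite /g ye !eqxx /= orbT.
    by apply: imset_f; rewrite !inE eq_sym ef.
  by apply: imset_f; rewrite !inE ye; rewrite inE in yB.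
have c1 := leq_trans (subset_leq_card sG) (leq_imset_card _ _).
have c2 := cardsD1 e (~: B); rewrite inE eB in c2.
have c3 := cardsD B [set g x | x in ~: B].
have c4 := subset_leq_card (subsetIr B [set g x | x in ~: B]).
have c5 := cardsC B.
rewrite cB in c3 c5.
exfalso; exact: (arith3 c3 c4 c1 c2 c5 hT hb).
Qed.

Lemma arith4 (r d i gG nF y : nat) :
  d = r - i -> i <= gG -> gG <= nF -> y = d + nF - 0 -> r <= y.
Proof. lia. Qed.

Lemma indY (T : finType) (M : matroid T) (t : nat) B (g : T -> T) : loopless M ->
  (forall X : {set T}, ~~ kclaw M t.+1 X) -> #|T| + t = 2 * rank_of M ->
  indep M B -> #|B| = rank_of M ->
  (forall x, x \notin B -> g x \in Aset M B x) ->
  forall F : {set T}, F \subset ~: B -> indep M ((B :\: [set g x | x in F]) :|: F).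
Proof.
move=> hl hc hT iB cB hg.
have ginj : forall f1 f2, f1 \notin B -> f2 \notin B -> g f1 = g f2 -> f1 = f2.
  move=> f1 f2 f1B f2B e12; apply/eqP; apply: contraT => n12.
  have := disjointFr (S3 hl hc hT iB cB f1B f2B n12) (hg _ f1B).
  by rewrite e12 hg.
have gB : forall x, x \notin B -> g x \in B.
  by move=> x xB; apply: (subsetP (AsetB M B x)); apply: hg.
move=> F; move: {2}#|F| (leqnn #|F|) => n; elim: n F => [|n IH] F hF sF.
  have -> : F = set0 by apply/eqP; rewrite -cards_eq0 -leqn0.
  by apply: indep_sub iB; rewrite setU0 subsetDl.
case: (eqVneq F set0) => [->|/set0Pn [f fF]].
  by apply: indep_sub iB; rewrite setU0 subsetDl.
have nB : forall x, x \in F -> x \notin B.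
  by move=> x xF; have := subsetP sF x xF; rewrite inE.
have cF' : #|F :\ f| <= n by have := cardsD1 f F; rewrite fF; lia.
have fF' : f \notin F :\ f by rewrite !inE eqxx.
have sF'F : F :\ f \subset F by apply: subsetDl.
have memF' : forall x, x \in F -> x != f -> x \in F :\ f by move=> x xF xf; rewrite !inE xF xf.
move: (F :\ f) cF' fF' sF'F memF' => F' cF' fF' sF'F memF'.
have sF' : F' \subset ~: B by apply: subset_trans sF.
pose Y := (B :\: [set g x | x in F']) :|: F'.
have iY : indep M Y := IH F' cF' sF'.
have cY : #|Y| = rank_of M.
  apply/eqP; rewrite eqn_leq indep_le_rank //=.
  have c0 : (B :\: [set g x | x in F']) :&: F' = set0.
    apply/setP => x; rewrite in_set0; apply/negbTE/negP; rewrite inE => /andP[/setDP[xB _] xF].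
    by have := nB x (subsetP sF'F x xF); rewrite xB.
  have c1 := cardsU (B :\: [set g x | x in F']) F'; rewrite c0 cards0 in c1.
  have c2 := cardsD B [set g x | x in F']; rewrite cB in c2.
  have c3 := subset_leq_card (subsetIr B [set g x | x in F']).
  have c4 := leq_imset_card g F'.
  exact: arith4 c2 c3 c4 c1.
have fY : f \notin Y.
  by rewrite /Y in_setU negb_or fF' andbT in_setD negb_and (nB f fF) orbT.
have hF' : forall f', f' \in F' -> f' \in Aset M Y (g f').
  move=> f' f'F; rewrite inE.
  have f'Y : f' \in Y by rewrite inE f'F orbT.
  rewrite f'Y /=.
  have f'B : f' \notin B := nB f' (subsetP sF'F f' f'F).
  have cF'' : #|F' :\ f'| <= n.
    by apply: leq_trans cF'; apply: subset_leq_card; apply: subsetDl.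
  have sF'' : F' :\ f' \subset ~: B by apply: subset_trans sF'; apply: subsetDl.
  apply: indep_sub (IH _ cF'' sF'').
  apply/subsetP => x; rewrite !inE => /orP[/eqP->|/andP[xf /orP[xBG|xF]]].
  - apply/orP; left; rewrite gB // andbT.
    apply/imsetP => -[y yF e]; move: yF; rewrite !inE => /andP[yf yF'].
    have yB : y \notin B := nB y (subsetP sF'F y yF').
    by move: yf; rewrite (ginj _ _ f'B yB e) eqxx.
  - apply/orP; left; move: xBG => /andP[xG ->]; rewrite andbT.
    by apply: contra xG; apply: (subsetP (imsetS _ _)); apply: subsetDl.
  - by rewrite xf xF orbT.
have fB := nB f fF.
have gfB := gB f fB.
have gfR : g f \in Aset M Y f.
  apply: contraT => ngf.
  have := hg f fB; rewrite inE => /andP[_ igf].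
  suff : indep M (f |: Aset M Y f) by rewrite (negbTE (S2 iY cY fY)).
  apply: indep_sub igf.
  apply: setUS; apply/subsetP => x xR.
  have xY : x \in Y by apply: (subsetP (AsetB M Y f)).
  have xF' : x \notin F'.
    apply/negP => xF'.
    have xB : x \notin B := nB x (subsetP sF'F x xF').
    have gxY : g x \notin Y.
      rewrite /Y in_setU negb_or in_setD negb_and imset_f //=.
      by apply/negP => /(subsetP sF'); rewrite inE gB.
    have gxf : g x != f by apply: contraTneq (gB x xB) => ->.
    have := disjointFr (S3 hl hc hT iY cY gxY fY gxf) (hF' x xF').
    by rewrite xR.
  move: xY; rewrite /Y in_setU (negbTE xF') orbF => /setDP[xB _].
  rewrite !inE xB andbT; by apply: contraNneq ngf => <-.
move: gfR; rewrite inE => /andP[_ iYf].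
apply: indep_sub iYf; apply/subsetP => x; rewrite in_setU => /orP[/setDP[xB xG]|xF].
  rewrite !inE xB andbT; apply/orP; right; apply/andP; split.
    by apply: contraNneq xG => ->; apply: imset_f.
  by apply/orP; left; apply: contra xG; apply: (subsetP (imsetS _ sF'F)).
case: (eqVneq x f) => [->|xf]; first by rewrite setU11.
rewrite !inE; apply/orP; right; apply/andP; split.
  by apply: contraTneq gfB => <-; apply: nB.
by rewrite memF' ?orbT.
Qed.

Lemma arith1 (r d i gG c nT t : nat) :
  d = r - i -> i <= gG -> gG <= c -> r + c = nT -> d <= t -> 2 * r - t <= nT.
Proof. lia. Qed.

Lemma arith2 (r c nT t : nat) : t <= r -> r + c = nT -> nT = 2 * r - t ->
  nT + t = 2 * r /\ c = r - t.
Proof. lia. Qed.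

Theorem lemma3p2 (T : finType) (M : matroid T) (r t : nat) :
  1 <= t -> t <= r ->
  rank_of M = r ->
  loopless M ->
  (forall X : {set T}, ~~ kclaw M t.+1 X) ->
  2 * r - t <= #|T| /\
  (#|T| = 2 * r - t -> direct_sum_circuits_coloops M (r - t)).
Proof.
move=> t1 tr hr hl hc.
have [B iB cB] := exists_basis M.
pose g0 x := odflt x [pick y in Aset M B x].
have hg0 : forall x, x \notin B -> g0 x \in Aset M B x.
  move=> x xB; rewrite /g0.
  case: pickP => [y //|h0]; have [z hz] := S1 hl iB cB xB.
  by have := h0 z; rewrite /= hz.
have hb := claw_bound hc iB hg0.
have c3 := cardsD B [set g0 x | x in ~: B].
have c4 := subset_leq_card (subsetIr B [set g0 x | x in ~: B]).
have c1 := leq_imset_card g0 (~: B).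
have c5 := cardsC B.
rewrite cB hr in c3 c5.
split; first exact: arith1 c3 c4 c1 c5 hb.
move=> hT.
have [hT' cC] := arith2 tr c5 hT.
rewrite -hr in hT'.
have AB := AsetB M B.
have hcirc : forall e, e \notin B -> circuit M (e |: Aset M B e).
  move=> e eB; rewrite /circuit S2 //=; apply/forall_inP => x xC.
  case: (eqVneq x e) => [->|xe].
    apply: indep_sub iB; apply/subsetP => y; rewrite !inE => /andP[ye /orP[/eqP ye'|yA]].
      by rewrite ye' eqxx in ye.
    by case/andP: yA.
  have xA : x \in Aset M B e by move: xC; rewrite in_setU1 (negbTE xe).
  move: (xA); rewrite inE => /andP[_ ix].
  apply: indep_sub ix; apply/subsetP => y; rewrite !inE => /andP[yx /orP[->//|/andP[yB _]]].
  by rewrite yx yB orbT.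
exists [set e |: Aset M B e | e in ~: B]; split.
- apply/trivIsetP => C1 C2 /imsetP[e eB ->] /imsetP[f fB ->] neq.
  rewrite inE in eB; rewrite inE in fB.
  have ef : e != f by apply: contraNneq neq => ->.
  rewrite -setI_eq0; apply/eqP/setP => x; rewrite in_set0; apply/negbTE/negP.
  rewrite in_setI !in_setU1 => /andP[/orP[/eqP xe|xAe] /orP[/eqP xf|xAf]].
  + by move: ef; rewrite -xe -xf eqxx.
  + by move: eB; rewrite -xe (subsetP (AB f) x xAf).
  + by move: fB; rewrite -xf (subsetP (AB e) x xAe).
  + by have := disjointFr (S3 hl hc hT' iB cB eB fB ef) xAe; rewrite xAf.
- apply/imsetP => -[e _ h]; have := setU11 e (Aset M B e); by rewrite -h inE.
- rewrite card_in_imset ?cC //.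
  move=> e1 e2; rewrite !inE => e1B e2B h.
  have := setU11 e1 (Aset M B e1); rewrite h in_setU1 => /orP[/eqP //|e1A].
  by move: e1B; rewrite (subsetP (AB e2) _ e1A).
- by move=> C /imsetP[e eB ->]; apply: hcirc; rewrite inE in eB.
move=> X; apply/idP/forall_inP.
  move=> iX C /imsetP[e eB ->]; apply/negP => sub.
  rewrite inE in eB; have := hcirc e eB; rewrite /circuit => /andP[nC _].
  by move: nC; rewrite (indep_sub sub iX).
move=> h.
pose gX x := odflt (g0 x) [pick y in Aset M B x :\: X].
have hgX : forall x, x \notin B -> gX x \in Aset M B x.
  move=> x xB; rewrite /gX; case: pickP => [y /setDP[] //|_]; exact: hg0.
have gXX : forall y, y \in X -> y \notin B -> gX y \notin X.
  move=> y yX yB; rewrite /gX; case: pickP => [z /setDP[] //|h0].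
  have yC : y \in ~: B by rewrite inE.
  exfalso; have := h _ (imset_f (fun e => e |: Aset M B e) yC).
  apply/negP/negPn; rewrite subUset sub1set yX /=; apply/subsetP => z zA.
  by apply: contraT => zX; have := h0 z; rewrite /= inE zX zA.
have sF : X :\: B \subset ~: B by apply/subsetP => x; rewrite !inE => /andP[].
apply: indep_sub (indY hl hc hT' iB cB hgX sF).
apply/subsetP => x xX; rewrite in_setU; case: (boolP (x \in B)) => xB.
  apply/orP; left; rewrite in_setD xB andbT; apply/imsetP => -[y].
  rewrite inE => /andP[yB yX] exy.
  by have := gXX y yX yB; rewrite -exy xX.
by rewrite !in_setD xB xX orbT.
Qed.
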